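(* Let $\zeta_5$ be a primitive $5$-th root of unity. (1) $\{\operatorname{Tr}(M) : M\in G_q(\zeta_5)\}=\left\{0,\ \tfrac{\sqrt5-1}{2}c,\ c,\ \tfrac{\sqrt5+1}{2}c,\ 2c : c=\pm\zeta_5^j,\ j=0,1,2,3,4\right\}$. (2) For $M_q\in G_q$, let $f(q)=\operatorname{Tr} M_q\in\mathbb{Z}[q,q^{-1}]$. Then the following are equivalent: $f(1)$ is a multiple of $5$; $f(\zeta_5)=0$; $f(q)$ is divisible by $[5]_q=q^4+q^3+q^2+q+1$.
   Context: Let $q$ be a formal parameter and let $R_q=\begin{pmatrix} q & 1\\ 0 & 1\end{pmatrix}$, $S_q=\begin{pmatrix} 0 & -q^{-1}\\ 1 & 0\end{pmatrix}\in \mathrm{GL}(2,\mathbb{Z}[q,q^{-1}])$. Let $G_q=\langle R_q,S_q\rangle$ be the group they generate. For $\zeta\in\mathbb{C}^*$, set $G_q(\zeta)=\{M_q|_{q=\zeta} : M_q\in G_q\}\subset \mathrm{GL}(2,\mathbb{C})$. *)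

(* Defs.v *)
From HB Require Import structures.
From mathcomp Require Import all_boot all_order all_algebra.
Set Implicit Arguments. Unset Strict Implicit. Unset Printing Implicit Defensive.
Import Order.TTheory GRing.Theory Num.Theory.
Local Open Scope ring_scope.

Definition mx2 (T : Type) (a b c d : T) : 'M[T]_2 :=
  \matrix_(i < 2, j < 2)
    if i == ord0 then (if j == ord0 then a else b) else (if j == ord0 then c else d).

(* Generators of G_q and their inverses; elements of G_q = finite words in these. *)
Inductive gen := gR | gS | gRi | gSi.

Definition Rmx (A : comUnitRingType) (z : A) : 'M[A]_2 := mx2 z 1 0 1.
Definition Smx (A : comUnitRingType) (z : A) : 'M[A]_2 := mx2 0 (- z^-1) 1 0.

Definition gen_mx (A : comUnitRingType) (z : A) (g : gen) : 'M[A]_2 :=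
  match g with
  | gR => Rmx z | gS => Smx z
  | gRi => invmx (Rmx z) | gSi => invmx (Smx z)
  end.

Definition word_mx (A : comUnitRingType) (z : A) (w : seq gen) : 'M[A]_2 :=
  foldr (fun g M => gen_mx z g *m M) 1%:M w.

Definition Gq_at (A : comUnitRingType) (z : A) (M : 'M[A]_2) : Prop :=
  exists w : seq gen, M = word_mx z w.

(* A pair (p, k) represents q^{-k} p(q), with p in Z[q]. *)
Definition laurent := ({poly int} * nat)%type.

(* equality in Z[q,q^-1]: q^{-k} p = q^{-k'} p'  iff  p q^{k'} = p' q^k *)
Definition leqL (f g : laurent) : Prop := f.1 * 'X^(g.2) = g.1 * 'X^(f.2).
Definition lmul (f g : laurent) : laurent := (f.1 * g.1, (f.2 + g.2)%N).
Definition lev (A : comUnitRingType) (x : A) (f : laurent) : A :=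
  (map_poly (fun n : int => n%:~R) f.1).[x] * x ^- f.2.
Definition qint5 : laurent := ('X^4 + 'X^3 + 'X^2 + 'X + 1, 0%N).

(* Matrices over Z[q,q^-1]: a pair (P, k) represents q^{-k} P with P over Z[q]. *)
Definition lgen (g : gen) : 'M[{poly int}]_2 * nat :=
  match g with
  | gR  => (mx2 'X 1 0 1, 0%N)
  | gS  => (mx2 0 (-1) 'X 0, 1%N)
  | gRi => (mx2 1 (-1) 0 'X, 1%N)
  | gSi => (mx2 0 1 (- 'X) 0, 0%N)
  end.

Definition lword (w : seq gen) : 'M[{poly int}]_2 * nat :=
  foldr (fun g M => ((lgen g).1 *m M.1, ((lgen g).2 + M.2)%N)) (1%:M, 0%N) w.

Definition ltrace (w : seq gen) : laurent := (\tr (lword w).1, (lword w).2).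

(* Main.v *)
Require Import Defs.
From HB Require Import structures.
From mathcomp Require Import all_boot all_order all_algebra.
From mathcomp Require Import ring.
Import Order.TTheory GRing.Theory Num.Theory.
Local Open Scope ring_scope.

Definition Z4 := (int * int * int * int)%type.
Definition addZ (x y : Z4) : Z4 :=
  let: (a0,a1,a2,a3) := x in let: (b0,b1,b2,b3) := y in (a0+b0, a1+b1, a2+b2, a3+b3).
Definition mulZ (x y : Z4) : Z4 :=
  let: (a0,a1,a2,a3) := x in let: (b0,b1,b2,b3) := y in
  let d0 := a0*b0 in
  let d1 := a0*b1 + a1*b0 in
  let d2 := a0*b2 + a1*b1 + a2*b0 in
  let d3 := a0*b3 + a1*b2 + a2*b1 + a3*b0 in
  let d4 := a1*b3 + a2*b2 + a3*b1 in
  let d5 := a2*b3 + a3*b2 in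
  let d6 := a3*b3 in
  (d0 - d4 + d5, d1 - d4 + d6, d2 - d4, d3 - d4).
Definition zeroZ : Z4 := (0,0,0,0).
Definition oneZ : Z4 := (1,0,0,0).
Definition mone : Z4 := (-1,0,0,0).
Definition zZ : Z4 := (0,1,0,0).
Definition mzZ : Z4 := (0,-1,0,0).
Definition z4Z : Z4 := (-1,-1,-1,-1).
Definition mz4Z : Z4 := (1,1,1,1).

Definition MT := (Z4 * Z4 * Z4 * Z4)%type.
Definition mulMT (A B : MT) : MT :=
  let: (a,b,c,d) := A in let: (e,f,g,h) := B in
  (addZ (mulZ a e) (mulZ b g), addZ (mulZ a f) (mulZ b h),
   addZ (mulZ c e) (mulZ d g), addZ (mulZ c f) (mulZ d h)).
Definition idT : MT := (oneZ, zeroZ, zeroZ, oneZ).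
Definition genT (g : gen) : MT :=
  match g with
  | gR => (zZ, oneZ, zeroZ, oneZ)
  | gS => (zeroZ, mz4Z, oneZ, zeroZ)
  | gRi => (z4Z, mz4Z, zeroZ, oneZ)
  | gSi => (zeroZ, oneZ, mzZ, zeroZ)
  end.
Definition trT (A : MT) : Z4 := let: (a,b,c,d) := A in addZ a d.
Definition sim (w : seq gen) : MT := foldr (fun g T => mulMT (genT g) T) idT w.

Definition gens := [:: gR; gS; gRi; gSi].

Definition insertL (x : MT * seq gen) (l : seq (MT * seq gen)) (acc : seq (MT*seq gen)) :=
  if x.1 \in map fst l then acc else if x.1 \in map fst acc then acc else x :: acc.

Fixpoint clos (n : nat) (seen fr : seq (MT * seq gen)) : seq (MT * seq gen) :=
  match n with
  | O => seen
  | S n => let nw := foldr (fun x acc => insertL x seen acc) [::]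
                      [seq (mulMT (genT g) p.1, g :: p.2) | p <- fr, g <- gens] in
           clos n (seen ++ nw) nw
  end.

Definition Lw := Eval vm_compute in clos 12 [:: (idT, [::])] [:: (idT, [::])].
Definition L := Eval vm_compute in map fst Lw.
Definition closed_chk := (idT \in L) && all (fun M => all (fun g => mulMT (genT g) M \in L) gens) L.

Definition sumZ (t : Z4) : int := let: (a,b,c,d) := t in a+b+c+d.
Definition atup (eps : bool) (a : nat) : Z4 :=
  match a with
  | 0 => zeroZ
  | 1 => if eps then (-1,0,-1,-1) else (0,0,1,1)
  | 2 => oneZ
  | 3 => if eps then (0,0,-1,-1) else (1,0,1,1)
  | _ => (2,0,0,0)
  end.
Definition unitT (s : bool) (j : nat) : Z4 :=
  mulZ (if s then mone else oneZ) (iter j (mulZ zZ) oneZ).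
Definition tgt eps j s a := mulZ (atup eps a) (unitT s j).
Definition params : seq (nat * bool * nat) :=
  [seq (js.1, js.2, a) | js <- [seq (j, s) | j <- iota 0 5, s <- [:: false; true]], a <- iota 0 5].
Definition traces_chk eps := all (fun M => let t := trT M in
   has (fun p => [&& (p.1.1 < 5)%N, (p.2 < 5)%N & t == tgt eps p.1.1 p.1.2 p.2]) params &&
   ((t == zeroZ) || (~~ (5 %| sumZ t)%Z &&
      has (fun p => [&& (0 < p.2)%N, (p.2 < 5)%N & t == tgt eps p.1.1 p.1.2 p.2]) params))) L.
Definition findw eps j s a :=
  head [::] [seq x.2 | x <- Lw & trT x.1 == tgt eps j s a].
Definition words_chk eps := all (fun j => all (fun s => all (fun a =>
   trT (sim (findw eps j s a)) == tgt eps j s a) (iota 0 5)) [:: false; true]) (iota 0 5).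
Lemma chk_all : [&& closed_chk, traces_chk true, traces_chk false, words_chk true & words_chk false].
Proof. vm_compute. reflexivity. Qed.
Set Implicit Arguments. Unset Strict Implicit. Unset Printing Implicit Defensive.
Definition Phi5 : {poly int} := qint5.1.
Definition pz (t : Z4) : {poly int} :=
  let: (a,b,c,d) := t in a%:~R + b%:~R * 'X + c%:~R * 'X^2 + d%:~R * 'X^3.
Definition cong (p q : {poly int}) := exists r, p = q + r * Phi5.

Lemma cong_refl p : cong p p.
Proof. by exists 0; rewrite mul0r addr0. Qed.
Lemma cong_eq p q : p = q -> cong p q.
Proof. by move=> ->; apply: cong_refl. Qed.
Lemma cong_trans p q s : cong p q -> cong q s -> cong p s.
Proof. by move=> [r1 ->] [r2 ->]; exists (r1 + r2); ring. Qed.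
Lemma congD p1 q1 p2 q2 : cong p1 q1 -> cong p2 q2 -> cong (p1 + p2) (q1 + q2).
Proof. by move=> [r1 ->] [r2 ->]; exists (r1 + r2); ring. Qed.
Lemma congM p1 q1 p2 q2 : cong p1 q1 -> cong p2 q2 -> cong (p1 * p2) (q1 * q2).
Proof. by move=> [r1 ->] [r2 ->]; exists (r1 * q2 + q1 * r2 + r1 * r2 * Phi5); ring. Qed.
Lemma pz_add x y : pz (addZ x y) = pz x + pz y.
Proof. case: x => [[[a b] c] d]; case: y => [[[e f] g] h] /=; rewrite !intrD; ring. Qed.
Lemma pz_mul x y : cong (pz x * pz y) (pz (mulZ x y)).
Proof.
case: x => [[[a0 a1] a2] a3]; case: y => [[[b0 b1] b2] b3] /=.
exists ((a1*b3 + a2*b2 + a3*b1)%:~R + (a2*b3 + a3*b2)%:~R * ('X - 1)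
        + (a3*b3)%:~R * 'X * ('X - 1)).
rewrite /Phi5 /=. rewrite !(intrD, intrB, intrM). ring.
Qed.
Definition o1 : 'I_2 := Ordinal (isT : (1 < 2)%N).
Lemma I2 (i : 'I_2) : i = ord0 \/ i = o1.
Proof. by case: i => [[|[|//]]] Hi; [left|right]; apply: val_inj. Qed.
Lemma mulmx2 (R : pzSemiRingType) (A B : 'M[R]_2) i j :
  (A *m B) i j = A i ord0 * B ord0 j + A i o1 * B o1 j.
Proof.
rewrite !mxE big_ord_recl big_ord1.
by have -> : lift ord0 ord0 = o1 :> 'I_2 by apply: val_inj.
Qed.
Lemma tr2 (R : pzSemiRingType) (A : 'M[R]_2) : \tr A = A ord0 ord0 + A o1 o1.
Proof.
rewrite /mxtrace big_ord_recl big_ord1.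
by have -> : lift ord0 ord0 = o1 :> 'I_2 by apply: val_inj.
Qed.
Definition entT (A : MT) (i j : 'I_2) : Z4 :=
  let: (a,b,c,d) := A in
  if i == ord0 then (if j == ord0 then a else b) else (if j == ord0 then c else d).
Lemma entT_mul A B i j : entT (mulMT A B) i j =
  addZ (mulZ (entT A i ord0) (entT B ord0 j)) (mulZ (entT A i o1) (entT B o1 j)).
Proof.
case: A => [[[a b] c] d]; case: B => [[[e f] g] h].
by case: (I2 i) => ->; case: (I2 j) => ->.
Qed.
Lemma trT_ent A : trT A = addZ (entT A ord0 ord0) (entT A o1 o1).
Proof. by case: A => [[[a b] c] d]. Qed.
Lemma mx2E (T : Type) (a b c d : T) i j :
  mx2 a b c d i j = if i == ord0 then (if j == ord0 then a else b) else (if j == ord0 then c else d).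
Proof. by rewrite mxE. Qed.

Ltac solve_cong :=
  first [ exists 0; rewrite /Phi5 /=; ring
        | exists 1; rewrite /Phi5 /=; ring
        | exists (-1); rewrite /Phi5 /=; ring ].

Lemma gen_cong g i k :
  cong ((lgen g).1 i k) ('X ^+ (lgen g).2 * pz (entT (genT g) i k)).
Proof.
case: g; case: (I2 i) => ->; case: (I2 k) => -> /=; rewrite mx2E /=; solve_cong.
Qed.

Lemma lword_cong w i j :
  cong ((lword w).1 i j) ('X ^+ (lword w).2 * pz (entT (sim w) i j)).
Proof.
elim: w i j => [|g w IH] i j /=.
  rewrite !mxE; case: (I2 i) => ->; case: (I2 j) => -> /=; solve_cong.
rewrite mulmx2 entT_mul pz_add.
apply: cong_trans.
  apply: congD; apply: congM; (apply: gen_cong || apply: IH).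
rewrite exprD mulrDr.
apply: congD.
  rewrite mulrACA; apply: congM; [apply: cong_refl| apply: pz_mul].
rewrite mulrACA; apply: congM; [apply: cong_refl| apply: pz_mul].
Qed.

Lemma tr_cong w : cong (ltrace w).1 ('X ^+ (ltrace w).2 * pz (trT (sim w))).
Proof.
rewrite /ltrace /= tr2 trT_ent pz_add mulrDr.
by apply: congD; apply: lword_cong.
Qed.
Section Ev.
Variable A : comUnitRingType.
Variable x : A.
Definition ev (p : {poly int}) : A := (map_poly (fun n : int => n%:~R) p).[x].
Lemma evM p q : ev (p * q) = ev p * ev q.
Proof. by rewrite /ev rmorphM hornerM. Qed.
Lemma evD p q : ev (p + q) = ev p + ev q.
Proof. by rewrite /ev rmorphD hornerD. Qed.
Lemma evX : ev 'X = x.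
Proof. by rewrite /ev map_polyX hornerX. Qed.
Lemma evXn k : ev ('X ^+ k) = x ^+ k.
Proof. by rewrite /ev rmorphXn /= map_polyX hornerXn. Qed.
Lemma evi n : ev n%:~R = n%:~R.
Proof. by rewrite /ev rmorph_int horner_int. Qed.
Lemma ev1 : ev 1 = 1.
Proof. by rewrite /ev rmorph1 hornerC. Qed.
Lemma ev0 : ev 0 = 0.
Proof. by rewrite /ev rmorph0 horner0. Qed.
Lemma evN p : ev (- p) = - ev p.
Proof. by rewrite /ev rmorphN hornerN. Qed.
Lemma evPhi : ev Phi5 = x ^+ 4 + x ^+ 3 + x ^+ 2 + x + 1.
Proof. by rewrite /Phi5 /= !(evD, evXn, evX, ev1). Qed.
Lemma ev_pz a b c d : ev (pz (a, b, c, d)) = a%:~R + b%:~R * x + c%:~R * x ^+ 2 + d%:~R * x ^+ 3.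
Proof. by rewrite /pz !(evD, evM, evXn, evX, evi). Qed.
Lemma ev_cong p q : cong p q -> exists r, ev p = ev q + r * ev Phi5.
Proof. by move=> [r ->]; exists (ev r); rewrite evD evM. Qed.
Lemma levE f : lev x f = ev f.1 * x ^- f.2.
Proof. by []. Qed.
End Ev.
Section Cz.
Variable C : numClosedFieldType.
Variable z : C.
Hypothesis hz : 5.-primitive_root z.

Lemma hz5 : z ^+ 5 = 1.
Proof. exact: prim_expr_order hz. Qed.
Lemma hzPhi : z ^+ 4 + z ^+ 3 + z ^+ 2 + z + 1 = 0.
Proof.
have hz1 : z != 1.
  by apply/negP => /eqP z1; move: (prim_order_dvd hz 1); rewrite z1 expr1 eqxx.
have : (z - 1) * (z ^+ 4 + z ^+ 3 + z ^+ 2 + z + 1) = 0.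
  have -> : (z - 1) * (z ^+ 4 + z ^+ 3 + z ^+ 2 + z + 1) = z ^+ 5 - 1 by ring.
  by rewrite hz5 subrr.
by move/eqP; rewrite mulf_eq0 subr_eq0 (negbTE hz1) /= => /eqP.
Qed.
Lemma hz0 : z != 0.
Proof.
by apply/negP => /eqP z0; move: hz5; rewrite z0 expr0n /= => /eqP; rewrite eq_sym oner_eq0.
Qed.
Lemma evPhiz : ev z Phi5 = 0.
Proof. by rewrite evPhi hzPhi. Qed.

Definition phi t := ev z (pz t).
Lemma phi_cong p q : cong p q -> ev z p = ev z q.
Proof. by move=> /(ev_cong z) [r ->]; rewrite evPhiz mulr0 addr0. Qed.
Lemma phiM x y : phi (mulZ x y) = phi x * phi y.
Proof. by rewrite /phi -evM; apply/esym/phi_cong/pz_mul. Qed.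

Lemma lev_z w : lev z (ltrace w) = phi (trT (sim w)).
Proof.
rewrite levE (phi_cong (tr_cong w)) evM evXn mulrAC mulfV ?mul1r //.
by rewrite expf_neq0 // hz0.
Qed.

Lemma invmx_eq (A B : 'M[C]_2) : A *m B = 1%:M -> invmx A = B.
Proof.
move=> AB; have [uA _] := mulmx1_unit AB.
by rewrite -[invmx A]mulmx1 -AB mulmxA mulVmx // mul1mx.
Qed.

Lemma invR : invmx (Rmx z) = mx2 z^-1 (- z^-1) 0 1.
Proof.
apply: invmx_eq; apply/matrixP => i j; rewrite mulmx2 /Rmx !mx2E !mxE.
have z0 := hz0.
by case: (I2 i) => ->; case: (I2 j) => -> /=; field.
Qed.
Lemma invS : invmx (Smx z) = mx2 0 1 (- z) 0.
Proof.
apply: invmx_eq; apply/matrixP => i j; rewrite mulmx2 /Smx !mx2E !mxE.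
have z0 := hz0.
by case: (I2 i) => ->; case: (I2 j) => -> /=; field.
Qed.

Lemma gen_ent g i k : gen_mx z g i k = z ^- (lgen g).2 * ev z ((lgen g).1 i k).
Proof.
have z0 := hz0.
case: g => /=; rewrite ?invR ?invS /Rmx /Smx !mx2E;
 case: (I2 i) => ->; case: (I2 k) => -> /=;
 rewrite ?(evD, evM, evX, ev1, ev0, evN, expr0, expr1, invr1, mul1r); by field.
Qed.

Lemma word_ent w i j : word_mx z w i j = z ^- (lword w).2 * ev z ((lword w).1 i j).
Proof.
elim: w i j => [|g w IH] i j /=.
  by rewrite expr0 invr1 mul1r !mxE; case: (i == j); rewrite ?ev1 ?ev0.
rewrite mulmx2 !gen_ent !IH mulmx2 evD !evM exprD invfM. ring.
Qed.

Lemma tr_word w : \tr (word_mx z w) = lev z (ltrace w).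
Proof. by rewrite tr2 !word_ent levE /= tr2 evD; ring. Qed.
Definition vv := 1 + 2 * (z + z ^+ 4).
Lemma vv2 : vv ^+ 2 = 5.
Proof.
have -> : vv ^+ 2 = 5 + 4 * (z ^+ 4 + z ^+ 3 + z ^+ 2 + z + 1)
                     + (z ^+ 5 - 1) * (8 + 4 * z ^+ 3) by rewrite /vv; ring.
by rewrite hzPhi hz5 subrr !mul0r mulr0 !addr0.
Qed.
Lemma sq5 : exists eps : bool, sqrtC 5 = if eps then vv else - vv.
Proof.
have : (sqrtC 5 - vv) * (sqrtC 5 + vv) = 0.
  have -> : (sqrtC 5 - vv) * (sqrtC 5 + vv) = sqrtC 5 ^+ 2 - vv ^+ 2 by ring.
  by rewrite sqrtCK vv2 subrr.
move/eqP; rewrite mulf_eq0 => /orP [h|h].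
  by exists true; apply/eqP; rewrite -subr_eq0.
by exists false; apply/eqP; rewrite -addr_eq0.
Qed.

Definition alist : seq C := [:: 0; (sqrtC 5 - 1) / 2; 1; (sqrtC 5 + 1) / 2; 2].

Lemma hz4 : z ^+ 4 = - (z ^+ 3 + z ^+ 2 + z + 1).
Proof.
transitivity (z ^+ 4 - (z ^+ 4 + z ^+ 3 + z ^+ 2 + z + 1)); last by ring.
by rewrite hzPhi subr0.
Qed.

Lemma two_nz : (2 : C) != 0.
Proof. by rewrite pnatr_eq0. Qed.

Lemma phi_atup eps a : (a < 5)%N -> sqrtC 5 = (if eps then vv else - vv) ->
  phi (atup eps a) = nth 0 alist a.
Proof.
move=> ha hs; have h2 := two_nz.
case: a ha => [|[|[|[|[|//]]]]] _; case: eps hs => hs;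
  rewrite /phi /= ev_pz /= ?hs /vv ?hz4; by field.
Qed.

Lemma phi_unit s j : phi (unitT s j) = (-1) ^+ s * z ^+ j.
Proof.
rewrite /unitT phiM; congr (_ * _).
  by case: s; rewrite /phi ev_pz /=; ring.
elim: j => [|j IH]; first by rewrite /phi /= ev_pz; ring.
by rewrite iterS phiM IH exprS /phi ev_pz; ring.
Qed.

Lemma phi_tgt eps j s a : (a < 5)%N -> sqrtC 5 = (if eps then vv else - vv) ->
  phi (tgt eps j s a) = nth 0 alist a * ((-1) ^+ s * z ^+ j).
Proof. by move=> ha hs; rewrite /tgt phiM phi_atup // phi_unit. Qed.

Lemma alist_nz a : (0 < a < 5)%N -> nth 0 alist a != 0.
Proof.
have h2 := two_nz.
have n51 : forall y : C, sqrtC 5 = y -> y ^+ 2 = 1 -> False.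
  move=> y hy hy2; have := sqrtCK (5 : C); rewrite hy hy2 => /eqP.
  by rewrite eq_sym pnatr_eq1.
case: a => [|[|[|[|[|//]]]]] //= _.
- rewrite mulf_neq0 ?invr_neq0 // subr_eq0; apply/eqP => h.
  by apply: (n51 1) => //; rewrite expr1n.
- exact: oner_neq0.
- rewrite mulf_neq0 ?invr_neq0 // addr_eq0; apply/eqP => h.
  by apply: (n51 (-1)) => //; rewrite sqrrN expr1n.
Qed.
End Cz.

Lemma all_gen (p : pred gen) : all p gens -> forall g, p g.
Proof. by rewrite /gens /= => /and4P [h1 h2 h3 /andP [h4 _]]; case. Qed.

Lemma ev1_pz t : ev (1 : int) (pz t) = sumZ t.
Proof. by case: t => [[[a b] c] d]; rewrite ev_pz !expr1n !mulr1 !intz. Qed.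


Lemma simL w : sim w \in L.
Proof.
have /and5P [hcl _ _ _ _] := chk_all.
elim: w => [|g w IH] /=; first by case/andP: hcl.
have [_ hcl2] := andP hcl.
exact: (all_gen (elimT allP hcl2 _ IH)).
Qed.

Lemma trL eps w : let t := trT (sim w) in
    has (fun p => [&& (p.1.1 < 5)%N, (p.2 < 5)%N & t == tgt eps p.1.1 p.1.2 p.2]) params &&
   ((t == zeroZ) || (~~ (5 %| sumZ t)%Z &&
      has (fun p => [&& (0 < p.2)%N, (p.2 < 5)%N & t == tgt eps p.1.1 p.1.2 p.2]) params)).
Proof.
have /and5P [_ htr1 htr2 _ _] := chk_all.
have htr : traces_chk eps by case: (eps).
exact: (elimT allP htr _ (simL w)).
Qed.

Lemma hwL eps (j : 'I_5) s ai : (ai < 5)%N -> trT (sim (findw eps j s ai)) = tgt eps j s ai.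
Proof.
move=> hai.
have /and5P [_ _ _ hw1 hw2] := chk_all.
have hw : words_chk eps by case: (eps).
have hj : (nat_of_ord j \in iota 0 5) by rewrite mem_iota /= ltn_ord.
have hs' : s \in [:: false; true] by case: s.
have hai' : ai \in iota 0 5 by rewrite mem_iota.
have hw1' := elimT allP hw _ hj.
have hw2' := elimT allP hw1' _ hs'.
by apply/eqP; exact: (elimT allP hw2' _ hai').
Qed.

Theorem corollary3p7 (C : numClosedFieldType) (z : C) (hz : 5.-primitive_root z) :
  (forall t : C,
     (exists M : 'M[C]_2, Gq_at z M /\ t = \tr M) <->
     (exists (j : 'I_5) (s : bool) (a : C),
        a \in [:: 0; (sqrtC 5 - 1) / 2; 1; (sqrtC 5 + 1) / 2; 2] /\
        t = a * ((-1) ^+ s * z ^+ j)))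
  /\
  (forall w : seq gen,
     ((5 %| lev (1 : int) (ltrace w))%Z <-> lev z (ltrace w) = 0) /\
     (lev z (ltrace w) = 0 <-> exists g : laurent, leqL (ltrace w) (lmul qint5 g))).
Proof.
have [eps hs] := sq5 hz.
split.
  move=> t; split.
    move=> [M [[w ->] ->]]; rewrite (tr_word hz) (lev_z hz).
    have /andP [/hasP [[[j s] a] _ /and3P [hj ha /eqP ht]] _] := trL eps w.
    exists (Ordinal hj), s, (nth 0 (alist C) a); split.
      exact: (@mem_nth _ 0 (alist C) a ha).
    by rewrite ht (phi_tgt hz).
  move=> [j [s [a [ha ->]]]].
  have ha' : a \in alist C := ha.
  set ai := index a (alist C).
  have hai : (ai < 5)%N by rewrite -[5%N]/(size (alist C)) index_mem.
  have ea : a = nth 0 (alist C) ai by rewrite nth_index.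
  exists (word_mx z (findw eps j s ai)); split; first by exists (findw eps j s ai).
  rewrite (tr_word hz) (lev_z hz).
  rewrite (hwL eps j s hai).
  by rewrite (@phi_tgt _ z hz eps j s ai hai hs) -ea.
move=> w.
have /andP [_ hcase] := trL eps w.
have lz : lev z (ltrace w) = phi z (trT (sim w)) := lev_z hz w.
have [r e] := ev_cong (1 : int) (tr_cong w).
have l1 : lev (1 : int) (ltrace w) = sumZ (trT (sim w)) + r * 5.
  rewrite levE e evM evXn !expr1n invr1 !mulr1 mul1r ev1_pz evPhi !expr1n.
  by [].
have [r2 e2] := tr_cong w.
move: hcase l1 lz e2; set t := trT (sim w) => hcase l1 lz e2.
have ev_nz : forall k : nat, z ^+ k != 0 by move=> k; exact: expf_neq0 (hz0 hz).
case/orP: hcase => [/eqP t0 | /andP [h5 /hasP [[[j s] a] _ /and3P [a0 a5 /eqP ht]]]].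
  have p0 : phi z t = 0 by rewrite t0 /phi ev_pz; ring.
  have pz0 : pz t = 0 by rewrite t0 /pz; ring.
  split; split.
  - by rewrite lz p0.
  - by move=> _; rewrite l1 t0 (_ : sumZ zeroZ = 0) // add0r; apply: dvdz_mull; apply: dvdzz.
  - move=> _; exists (r2, (ltrace w).2).
    change ((ltrace w).1 * 'X^(0 + (ltrace w).2)%N = (qint5.1 * r2) * 'X^((ltrace w).2)).
    by rewrite e2 pz0 mulr0 add0r add0n [r2 * _]mulrC.
  - by rewrite lz p0.
have pnz : phi z t != 0.
  rewrite ht (phi_tgt hz) //; apply: mulf_neq0; first by apply: alist_nz; rewrite a0.
  by rewrite mulf_neq0 ?signr_eq0.
have lnz : lev z (ltrace w) != 0 by rewrite lz.
split; split.
- by rewrite l1 rpredDr ?(negbTE h5) //; apply: dvdz_mull; apply: dvdzz.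
- by move=> h; rewrite h eqxx in lnz.
- by move=> h; rewrite h eqxx in lnz.
move=> [g hg]; exfalso.
have hg' : (ltrace w).1 * 'X^(0 + g.2)%N = (qint5.1 * g.1) * 'X^((ltrace w).2) := hg.
have := congr1 (ev z) hg'; rewrite !evM !evXn.
have -> : ev z qint5.1 = 0 by apply: (evPhiz hz).
rewrite !mul0r => /eqP; rewrite mulf_eq0 (negbTE (ev_nz _)) orbF => /eqP h.
by move: lnz; rewrite levE h mul0r eqxx.
Qed.
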